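(* Let $m/n\in(0,1/2)$ in lowest terms, write $c_{m/n}=1\,0^{\kappa_1}\,11\,0^{\kappa_2}\,11\cdots11\,0^{\kappa_m}\,1$, and let $1\le r\le m$. Then the word $c=1\,0^{\kappa_r+1}\,11\,0^{\kappa_{r+1}}\,11\cdots11\,0^{\kappa_m}\,1$ disagrees with $c_{m/n}$ at some position within the shorter of their two lengths, and $c$ is greater than $c_{m/n}$ in the unimodal order.
   Context: $\kappa_1=\lfloor n/m\rfloor-1$ and $\kappa_i=\lfloor in/m\rfloor-\lfloor(i-1)n/m\rfloor-2$ for $2\le i\le m$. The unimodal order $\prec$ on words over $\{0,1\}$ which disagree within their common length: if $j$ is the first index with $s_j\ne t_j$, then $s\prec t$ iff either $s_0\cdots s_{j-1}$ contains an even number of $1$s and $s_j<t_j$, or an odd number of $1$s and $s_j>t_j$. *)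

(* Defs.v *)
From mathcomp Require Import all_boot.
Set Implicit Arguments. Unset Strict Implicit. Unset Printing Implicit Defensive.

(* Words over {0,1} are encoded as seq bool, with true = 1 and false = 0. *)

Definition kappa (m n i : nat) : nat :=
  if i == 1 then n %/ m - 1 else (i * n) %/ m - ((i - 1) * n) %/ m - 2.

Definition sep (m i : nat) : seq bool :=
  if i < m then [:: true; true] else [:: true].

Definition tailw (m n r : nat) : seq bool :=
  flatten [seq nseq (kappa m n i) false ++ sep m i | i <- iota r (m - r + 1)].

Definition cmn (m n : nat) : seq bool := true :: tailw m n 1.

Definition cr (m n r : nat) : seq bool := true :: false :: tailw m n r.

Definition disagree (s t : seq bool) : Prop :=
  exists j, j < minn (size s) (size t) /\ nth false s j != nth false t j.

Definition unimodal_lt (s t : seq bool) : Prop :=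
  exists j, [/\ j < size s, j < size t,
     (forall k, k < j -> nth false s k = nth false t k),
     nth false s j != nth false t j &
     (if ~~ odd (count id (take j s))
      then (nth false s j < nth false t j)
      else (nth false s j > nth false t j))].

(* Main.v *)
Require Import Defs.
From mathcomp Require Import all_boot zify.

Definition blk (x : nat * seq bool) := nseq x.1 false ++ x.2.
Definition W l := flatten (map blk l).

Lemma unimodal_cat (P : seq bool) (x y : bool) (s t : seq bool) : x != y ->
  (if ~~ odd (count id P) then x < y else y < x) ->
  unimodal_lt (P ++ x :: s) (P ++ y :: t).
Proof.
move=> Hxy Hc; exists (size P); split.
- by rewrite size_cat /= addnS ltnS leq_addr.
- by rewrite size_cat /= addnS ltnS leq_addr.
- by move=> k Hk; rewrite !nth_cat Hk.
- by rewrite !nth_cat ltnn subnn.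
- by rewrite take_size_cat // !nth_cat ltnn subnn.
Qed.

Lemma W_split l j x0 : j < size l ->
  W l = W (take j l) ++ blk (nth x0 l j) ++ W (drop j.+1 l).
Proof.
move=> Hj; rewrite -{1}(cat_take_drop j l) (drop_nth x0) // /W map_cat flatten_cat /=.
by [].
Qed.

Lemma count_W p : all (fun x => x.2 == [:: true; true]) p -> count id (W p) = 2 * size p.
Proof.
elim: p => [|x p IH] //= /andP[hx hp].
rewrite /W /= !count_cat count_nseq (eqP hx) /=.
rewrite -/(W p) IH // mul0n add0n mulnS.
by [].
Qed.

Lemma lex_W l1 l2 j : j < size l1 -> j < size l2 ->
  (forall i, i < j -> nth (0,[::]) l1 i = nth (0,[::]) l2 i) ->
  (forall i, i < j -> (nth (0,[::]) l1 i).2 = [:: true; true]) ->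
  (nth (0,[::]) l1 j).1 < (nth (0,[::]) l2 j).1 ->
  head false (nth (0,[::]) l1 j).2 = true ->
  unimodal_lt (true :: W l1) (true :: W l2).
Proof.
move=> H1 H2 Heq Hsep Hlt Hhd.
rewrite (@W_split l1 j (0,[::]) H1) (@W_split l2 j (0,[::]) H2).
have Ht : take j l1 = take j l2.
  apply: (@eq_from_nth _ (0,[::])); first by rewrite !size_take H1 H2.
  move=> i; rewrite size_take H1 => hi; rewrite !nth_take //; exact: Heq.
have Hall : all (fun x => x.2 == [:: true; true]) (take j l1).
  apply/(all_nthP (0,[::])) => i; rewrite size_take H1 => hi.
  by rewrite nth_take // Hsep.
have Hc := @count_W _ Hall.
rewrite -Ht.
move: Hlt Hhd; case: (nth _ l1 j) => a s1; case: (nth _ l2 j) => b s2 /= hab.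
case: s1 => [|z s1] //= -> .
rewrite /blk /=.
have -> : nseq b false = nseq a false ++ false :: nseq (b - a.+1) false.
  by rewrite -[false :: _]/(nseq 1 false ++ _) catA -!nseqD; congr nseq; lia.
set T := W (take j l1).
have E1 : true :: T ++ (nseq a false ++ true :: s1) ++ W (drop j.+1 l1)
  = (true :: T ++ nseq a false) ++ true :: (s1 ++ W (drop j.+1 l1)) by rewrite /= -!catA.
have E2 : true :: T ++ ((nseq a false ++ false :: nseq (b - a.+1) false) ++ s2) ++ W (drop j.+1 l2)
  = (true :: T ++ nseq a false) ++ false :: (nseq (b - a.+1) false ++ s2 ++ W (drop j.+1 l2))
  by rewrite /= -!catA.
rewrite E1 E2; apply: unimodal_cat => //.
rewrite /= count_cat count_nseq /T Hc /=.
by rewrite mul0n addn0 add0n oddM.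
Qed.

Definition Dd (m n i : nat) := (i * n) %/ m - ((i - 1) * n) %/ m.
Definition yy (m n t : nat) := (t * n) %% m.

Lemma Dd_S m n t : 0 < m -> Dd m n t.+1 = n %/ m + (m <= yy m n t + n %% m).
Proof.
move=> m0; rewrite /Dd /yy subn1 /= mulSn divnD // [n %% m + _]addnC.
by rewrite addnAC addnK.
Qed.

Lemma y_step m n t : 0 < m ->
  yy m n t.+1 = yy m n t + n %% m - m * (m <= yy m n t + n %% m).
Proof.
move=> m0; rewrite /yy mulSn addnC -modnDm.
have h1 : (t * n) %% m < m by rewrite ltn_pmod.
have h2 : n %% m < m by rewrite ltn_pmod.
case: leqP => h.
- rewrite muln1.
  have -> : t * n %% m + n %% m = (t * n %% m + n %% m - m) + m by lia.
  rewrite modnDr modn_small; lia.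
- by rewrite muln0 subn0 modn_small.
Qed.

Lemma inv m n r : 0 < m -> 0 < r -> forall j,
  (forall s, s < j -> Dd m n (1 + s) = Dd m n (r + s)) ->
  yy m n (r.-1 + j) = yy m n j + yy m n r.-1.
Proof.
move=> m0 r0; elim=> [|j IH] H.
  by rewrite addn0 /yy mul0n mod0n.
have IH' := IH (fun s hs => H s (ltnW hs)).
have := H j (ltnSn j).
have e : r + j = (r.-1 + j).+1 by lia.
rewrite e add1n !Dd_S // => /eqP; rewrite eqn_add2l IH' => /eqP hb.
rewrite addnS !y_step // IH' -hb.
case: leqP => h; lia.
Qed.

Lemma NT m n r : 0 < m -> coprime m n -> 2 <= r <= m ->
  exists j, [/\ j <= m - r, (forall t, t < j -> Dd m n (1 + t) = Dd m n (r + t)) &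
     Dd m n (1 + j) < Dd m n (r + j)].
Proof.
move=> m0 cop /andP[r2 rm].
have r0 : 0 < r by lia.
have yr : 0 < yy m n r.-1.
  rewrite lt0n; apply/negP => /eqP h.
  have : m %| r.-1 * n by apply/eqP.
  rewrite Gauss_dvdl // => /dvdn_leq; lia.
have a0 : 0 < n %% m.
  rewrite lt0n; apply/negP => /eqP h.
  have : m %| gcdn m n by rewrite dvdn_gcd dvdnn /dvdn h.
  rewrite (eqP cop) dvdn1; lia.
have ym : yy m n m.-1 + n %% m = m.
  have : m %| yy m n m.-1 + n %% m.
    by rewrite /dvdn /yy modnDm -mulSnr prednK // modnMr.
  have h1 : yy m n m.-1 < m by rewrite ltn_pmod.
  have h2 : n %% m < m by rewrite ltn_pmod.
  case/dvdnP => k hk; move: hk; case: k => [|[|k]] hk; nia.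
pose P t := (t <= m - r) && (Dd m n (1 + t) != Dd m n (r + t)).
have ex : exists t, P t.
  case: (boolP [forall t : 'I_(m - r), Dd m n (1 + t) == Dd m n (r + t)]) => hall.
  - exists (m - r); rewrite /P leqnn /=.
    have := @inv m n r m0 r0 (m - r).
    have -> : r.-1 + (m - r) = m.-1 by lia.
    move=> /(_ _) h.
    have {}h : yy m n m.-1 = yy m n (m - r) + yy m n r.-1.
      apply: h => s hs; apply/eqP; exact: (forallP hall (Ordinal hs)).
    have -> : r + (m - r) = m.-1.+1 by lia.
    rewrite add1n !Dd_S // ym leqnn.
    have -> : (m <= yy m n (m - r) + n %% m) = false by apply/negbTE; rewrite -ltnNge; lia.
    by rewrite eqn_add2l.
  - move/forallPn: hall => [t ht]; exists t; rewrite /P ht andbT; exact: ltnW (ltn_ord t).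
case: (ex_minnP ex) => j /andP[hj hd] hmin.
have Heq : forall t, t < j -> Dd m n (1 + t) = Dd m n (r + t).
  move=> t ht; apply/eqP; apply/negPn/negP => hne.
  have := hmin t; rewrite /P hne andbT.
  have -> : t <= m - r by lia.
  move=> /(_ isT); lia.
exists j; split => //.
move: hd; have h := @inv m n r m0 r0 j Heq.
have -> : r + j = (r.-1 + j).+1 by lia.
rewrite add1n !Dd_S // h.
case: (leqP m (yy m n j + n %% m)) => h1; case: (leqP m (yy m n j + yy m n r.-1 + n %% m)) => h2 /=; lia.
Qed.

Lemma kappaD m n k : 0 < k -> kappa m n k = Dd m n k - (if k == 1 then 1 else 2).
Proof.
move=> k0; rewrite /kappa /Dd; case: eqP => [->|_] //.
by rewrite mul1n subnn mul0n div0n subn0.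
Qed.

Lemma Dd_ge2 m n k : 0 < m -> 2 * m < n -> 0 < k -> 2 <= Dd m n k.
Proof.
move=> m0 mn k0; rewrite -(prednK k0) Dd_S //.
have : 2 <= n %/ m by rewrite leq_divRL //; lia.
lia.
Qed.

Lemma nth_map_iota (f : nat -> nat * seq bool) k len i : i < len ->
  nth (0,[::]) (map f (iota k len)) i = f (k + i).
Proof. by move=> hi; rewrite (nth_map 0) ?size_iota // nth_iota. Qed.

Theorem lemma4p2 (m n r : nat) :
  0 < m -> coprime m n -> 2 * m < n -> 1 <= r <= m ->
  disagree (cr m n r) (cmn m n) /\ unimodal_lt (cmn m n) (cr m n r).
Proof.
move=> m0 cop mn /andP[r1 rm].
suff H : unimodal_lt (cmn m n) (cr m n r).
  split => //; case: H => j [h1 h2 _ h3 _]; exists j; split.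
  - by rewrite leq_min h1 h2.
  - by rewrite eq_sym.
pose f i := (kappa m n i, sep m i).
have Ecmn : cmn m n = true :: W (map f (iota 1 m)).
  by rewrite /cmn /tailw /W -map_comp subnK.
have Ecr : cr m n r = true :: W (((kappa m n r).+1, sep m r) :: map f (iota r.+1 (m - r))).
  by rewrite /cr /tailw /W addn1 /= -map_comp.
have hsep : forall i, head false (sep m i) = true by move=> i; rewrite /sep; case: ifP.
rewrite Ecmn Ecr.
have D1 : Dd m n 1 = n %/ m by rewrite /Dd mul1n subnn mul0n div0n subn0.
have Dge := @Dd_ge2 m n _ m0 mn.
case: (leqP (kappa m n 1) (kappa m n r)) => hk.
  apply: (@lex_W _ _ 0) => //=.
  - by rewrite size_map size_iota.
  - by rewrite nth_map_iota // addn0 /= ltnS.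
  - rewrite nth_map_iota //; exact: hsep.
have r2 : 2 <= r.
  by case: r r1 hk rm {Ecr} => [|[|r]] //; lia.
have [j [hj Heq Hlt]] := @NT m n r m0 cop (introT andP (conj r2 rm)).
have Ln1 : forall i, i < m -> nth (0,[::]) (map f (iota 1 m)) i =
    (Dd m n (1 + i) - (if i == 0 then 1 else 2), sep m (1 + i)).
  move=> i hi; rewrite nth_map_iota // /f kappaD //.
have Ln2 : forall i, i <= m - r -> nth (0,[::]) (((kappa m n r).+1, sep m r) :: map f (iota r.+1 (m - r))) i =
    (Dd m n (r + i) - (if i == 0 then 1 else 2), sep m (r + i)).
  move=> [|i] hi /=.
  - rewrite addn0 kappaD; last lia.
    have -> : (r == 1) = false by apply/negbTE; lia.
    have := Dge r (ltnW r2) => h; congr pair; lia.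
  - rewrite nth_map_iota; last lia.
    rewrite /f kappaD; last lia.
    have -> : (r.+1 + i == 1) = false by apply/negbTE; lia.
    by rewrite addSnnS.
have Hsepe : forall k, k < m -> sep m k = [:: true; true] by move=> k hk0; rewrite /sep hk0.
apply: (@lex_W _ _ j).
- rewrite size_map size_iota; lia.
- rewrite /= size_map size_iota; lia.
- move=> i hi; rewrite Ln1 ?Ln2; try lia.
  rewrite Heq // !Hsepe //; lia.
- move=> i hi; rewrite Ln1 /=; last lia.
  rewrite Hsepe //; lia.
- rewrite Ln1 ?Ln2 /=; try lia.
  have := Dge (1 + j) isT; case: (j == 0); lia.
- rewrite Ln1; [exact: hsep | lia].
Qed.
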